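(* There exists a symmetric Stackelberg singleton congestion game (SSSCG) that admits no pessimistic Stackelberg equilibrium. In particular, this holds for the SSSCG with one follower, resources $R=\{r_1,r_2\}$, and costs $c_{r_1,\ell}(1)=2$, $c_{r_1,\ell}(2)=0$, $c_{r_1,f}(1)=1$, $c_{r_1,f}(2)=2$, $c_{r_2,\ell}(1)=2$, $c_{r_2,\ell}(2)=2$, $c_{r_2,f}(1)=1$, $c_{r_2,f}(2)=2$: there, $\inf_{\sigma_\ell}\max_{a\in E^{\sigma_\ell}}c_\ell^{(\sigma_\ell,a)}=1$, but this infimum is not attained.
   Context: A Stackelberg singleton congestion game (SSCG) is a tuple $(N,R,A,c_\ell,c_f)$ where $N=F\cup\{\ell\}$ is a finite set of players ($\ell$ is the leader, $F$ the set of followers), $R$ is a finite set of resources, $A=\{A_p\}_{p\in N}$ with $\emptyset\ne A_p\subseteq R$ the set of resources player $p$ may select (each player selects exactly one resource), and $c_\ell=\{c_{i,\ell}\}_{i\in R}$, $c_f=\{c_{i,f}\}_{i\in R}$ are the leader's and the followers' cost functions $c_{i,\ell},c_{i,f}:\mathbb N\to\mathbb Q$ (the same $c_{i,f}$ for all followers), with $c_{i,\ell}(0)=c_{i,f}(0)=0$. Let $n=|N|$, $r=|R|$. The leader commits to a (possibly mixed) strategy $\sigma_\ell$, a probability distribution on $A_\ell$ (set $\sigma_\ell(i)=0$ for $i\notin A_\ell$); it is pure if it puts probability $1$ on a single resource. The followers play a pure profile $a=(a_p)_{p\in F}$, $a_p\in A_p$; let $\nu^a_i=|\{p\in F:a_p=i\}|$.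 The followers' expected cost of resource $i$ when $x$ followers use it is $c^{\sigma_\ell}_{i,f}(x)=\sigma_\ell(i)c_{i,f}(x+1)+(1-\sigma_\ell(i))c_{i,f}(x)$. The leader's cost is $c_\ell^{(\sigma_\ell,a)}=\sum_{i\in A_\ell}\sigma_\ell(i)\,c_{i,\ell}(\nu^a_i+1)$. The profile $a$ is a Nash equilibrium (NE) for $\sigma_\ell$, written $a\in E^{\sigma_\ell}$, if for every $p\in F$ and every $a'_p\in A_p\setminus\{a_p\}$, $c^{\sigma_\ell}_{a_p,f}(\nu^a_{a_p})\le c^{\sigma_\ell}_{a'_p,f}(\nu^a_{a'_p}+1)$. A pessimistic Stackelberg equilibrium (PSE) is a pair $(\sigma_\ell,a)$ such that $\sigma_\ell$ attains the minimum over all leader strategies of $\max_{a'\in E^{\sigma_\ell}}c_\ell^{(\sigma_\ell,a')}$ and $a\in E^{\sigma_\ell}$ attains that maximum. An SSCG is symmetric (SSSCG) if $A_p=R$ for all $p\in N$. *)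

(* Defs.v *)
From HB Require Import structures.
From mathcomp Require Import all_boot all_order all_algebra.
Set Implicit Arguments. Unset Strict Implicit. Unset Printing Implicit Defensive.
Import Order.TTheory GRing.Theory Num.Theory.
Local Open Scope ring_scope.

Record sscg := SSCG {
  follower : finType;
  resource : finType;
  Af : follower -> {set resource};
  Al : {set resource};
  cl : resource -> nat -> rat;
  cf : resource -> nat -> rat;
  Af_ne : forall p, Af p != set0;
  Al_ne : Al != set0;
  cl0 : forall i, cl i 0%N = 0;
  cf0 : forall i, cf i 0%N = 0 }.

Arguments Af : clear implicits.
Arguments Al : clear implicits.
Arguments cl : clear implicits.
Arguments cf : clear implicits.

Definition symmetric_game (G : sscg) : Prop :=
  Al G = setT /\ forall p, Af G p = setT.

Section Strategies.
Variables (K : realFieldType) (G : sscg).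

Definition leader_strategy (s : resource G -> K) : Prop :=
  (forall i, 0 <= s i) /\ (forall i, i \notin Al G -> s i = 0) /\
  \sum_(i : resource G) s i = 1.

Definition profile (a : follower G -> resource G) : Prop :=
  forall p, a p \in Af G p.

Definition nu (a : follower G -> resource G) (i : resource G) : nat :=
  #|[set p | a p == i]|.

Definition cfs (s : resource G -> K) (i : resource G) (x : nat) : K :=
  s i * ratr (cf G i x.+1) + (1 - s i) * ratr (cf G i x).

Definition leader_cost (s : resource G -> K) (a : follower G -> resource G) : K :=
  \sum_(i in Al G) s i * ratr (cl G i (nu a i).+1).

Definition is_NE (s : resource G -> K) (a : follower G -> resource G) : Prop :=
  profile a /\
  forall p (i : resource G), i \in Af G p -> i != a p ->
    cfs s (a p) (nu a (a p)) <= cfs s i (nu a i).+1.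

Definition worst_value (s : resource G -> K) (v : K) : Prop :=
  (exists a, is_NE s a /\ leader_cost s a = v) /\
  (forall a, is_NE s a -> leader_cost s a <= v).

Definition is_PSE (s : resource G -> K) (a : follower G -> resource G) : Prop :=
  leader_strategy s /\ worst_value s (leader_cost s a) /\
  forall s' v', leader_strategy s' -> worst_value s' v' -> leader_cost s a <= v'.

Definition has_PSE : Prop := exists s a, is_PSE s a.

End Strategies.

(* The example game: one follower, R = {r1, r2} = 'I_2 (r1 = 0, r2 = 1). *)
Definition ex_cl (i : 'I_2) (x : nat) : rat :=
  if val i == 0%N then (if x == 1%N then 2%:R else 0)
  else (if (x == 1%N) || (x == 2%N) then 2%:R else 0).

Definition ex_cf (i : 'I_2) (x : nat) : rat :=
  if x == 1%N then 1 else if x == 2%N then 2%:R else 0.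

Lemma ex_Af_ne (p : 'I_1) : [set: 'I_2] != set0.
Proof. by apply/set0Pn; exists ord0. Qed.
Lemma ex_Al_ne : [set: 'I_2] != set0.
Proof. by apply/set0Pn; exists ord0. Qed.
Lemma ex_cl0 i : ex_cl i 0%N = 0.
Proof. by rewrite /ex_cl; case: ifP. Qed.
Lemma ex_cf0 i : ex_cf i 0%N = 0.
Proof. by []. Qed.

Definition example_game : sscg :=
  @SSCG 'I_1 'I_2 (fun _ => setT) setT ex_cl ex_cf ex_Af_ne ex_Al_ne ex_cl0 ex_cf0.

(* Main.v *)
Require Import Defs.
From HB Require Import structures.
From mathcomp Require Import all_boot all_order all_algebra.
From mathcomp Require Import lra.
Import Order.TTheory GRing.Theory Num.Theory.
Local Open Scope ring_scope.

Section Ex.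
Variable K : realFieldType.
Local Notation G := example_game.
Local Notation o0 := (ord0 : 'I_2).
Local Notation o1 := (ord_max : 'I_2).

Lemma I2_cases (i : 'I_2) : i = o0 \/ i = o1.
Proof. case: i => [[|[|k]] Hk] //; [left|right]; exact/val_inj. Qed.

Lemma nuE (a : 'I_1 -> 'I_2) i : nu (G := G) a i = (a ord0 == i).
Proof.
rewrite /nu; case: (a ord0 =P i) => H.
  rewrite (_ : [set p | a p == i] = setT) ?cardsT ?card_ord //.
  by apply/setP => p; rewrite !inE (ord1 p) H eqxx.
rewrite (_ : [set p | a p == i] = set0) ?cards0 //.
by apply/setP => p; rewrite !inE (ord1 p); apply/eqP.
Qed.

Lemma costE (s : 'I_2 -> K) (a : 'I_1 -> 'I_2) :
  leader_cost (G := G) s a = if a ord0 == o0 then 2 * s o1 else 2 * (s o0 + s o1).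
Proof.
rewrite /leader_cost /= (eq_bigl xpredT) => [|i]; last by rewrite inE.
rewrite !big_ord_recr big_ord0 /= !nuE.
have -> : widen_ord (leqnSn 1) (ord_max : 'I_1) = o0 by apply/val_inj.
case: (I2_cases (a ord0)) => ->.
  by rewrite /= /ex_cl /= rmorph0 ratr_nat; lra.
rewrite /= /ex_cl /= !ratr_nat; lra.
Qed.

Lemma cfsE (s : 'I_2 -> K) i : cfs (G := G) s i 1 = 1 + s i.
Proof. rewrite /cfs /= /ex_cf /= ratr_nat rmorph1; lra. Qed.

Lemma NE0 (s : 'I_2 -> K) (a : 'I_1 -> 'I_2) : a ord0 = o0 ->
  is_NE (G := G) s a <-> s o0 <= s o1.
Proof.
move=> H; split.
  case=> _ /(_ ord0 o1); rewrite H !nuE H !eqxx /= => /(_ (in_setT _) isT).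
  by rewrite !cfsE lerD2l.
move=> Hs; split; first by move=> p; rewrite inE.
move=> p i _; rewrite (ord1 p) H !nuE H eqxx.
case: (I2_cases i) => -> //; rewrite !cfsE /= lerD2l //.
Qed.

Lemma NE1 (s : 'I_2 -> K) (a : 'I_1 -> 'I_2) : a ord0 = o1 ->
  is_NE (G := G) s a <-> s o1 <= s o0.
Proof.
move=> H; split.
  case=> _ /(_ ord0 o0); rewrite H !nuE H !eqxx /= => /(_ (in_setT _) isT).
  by rewrite !cfsE lerD2l.
move=> Hs; split; first by move=> p; rewrite inE.
move=> p i _; rewrite (ord1 p) H !nuE H eqxx.
case: (I2_cases i) => -> //; rewrite !cfsE /= lerD2l //.
Qed.

Lemma LS (s : 'I_2 -> K) : leader_strategy (G := G) s ->
  [/\ 0 <= s o0, 0 <= s o1 & s o0 + s o1 = 1].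
Proof.
case=> H0 [_ H1]; split => //.
move: H1; rewrite /= !big_ord_recr big_ord0 /= add0r.
by have -> : widen_ord (leqnSn 1) (ord_max : 'I_1) = o0 by apply/val_inj.
Qed.

Lemma WV (s : 'I_2 -> K) v : leader_strategy (G := G) s ->
  worst_value (G := G) s v -> 1 < v.
Proof.
move=> /LS [h0 h1 h2] [[a [Ha Hc]] Hall].
have Hb := Hall (fun _ => o1).
rewrite costE /= in Hb.
move: Hc; rewrite costE; case: (I2_cases (a ord0)) => Ea; rewrite Ea /=.
  move: Ha; rewrite (NE0 _ _ Ea) => Ha Hv.
  case: (lerP (s o1) (s o0)) => Hl.
    have := Hb; rewrite (NE1 _ (fun _ => o1) erefl) => /(_ Hl); lra.
  lra.
move=> <-; lra.
Qed.
End Ex.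

Lemma approx (K : realFieldType) (eps : K) : 0 < eps -> exists s v, leader_strategy (G := example_game) s /\
        worst_value (G := example_game) s v /\ v < 1 + eps.
Proof.
move=> he.
set t := (2 + eps)^-1.
have ht : t * (2 + eps) = 1 by rewrite mulVf //; apply/lt0r_neq0; lra.
have tp : 0 < t by rewrite invr_gt0; lra.
pose s := fun i : 'I_2 => if i == ord0 then t else (1 + eps) * t.
have s0 : s ord0 = t by [].
have s1 : s ord_max = (1 + eps) * t by [].
exists s, (2 * ((1 + eps) * t)); split; [|split; [split|]].
- split; first by move=> i; rewrite /s; case: ifP => _; nra.
  split; first by move=> i; rewrite inE.
  rewrite /= !big_ord_recr big_ord0 /= add0r.
  have -> : widen_ord (leqnSn 1) (ord_max : 'I_1) = ord0 by apply/val_inj.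
  rewrite s0 s1; nra.
- exists (fun _ => ord0); split.
    by rewrite (@NE0 K s (fun _ => ord0) erefl) s0 s1; nra.
  by rewrite costE /= s1.
- move=> a; rewrite costE; case: (I2_cases (a ord0)) => Ea; rewrite Ea /=.
    by rewrite s1.
  by rewrite (@NE1 K s a Ea) s0 s1 => H; nra.
- nra.
Qed.

Theorem mainTheorem1 (K : realFieldType) :
  (exists G : sscg, symmetric_game G /\ ~ has_PSE K G) /\
  (symmetric_game example_game /\
   (forall s v, leader_strategy s -> worst_value (K := K) (G := example_game) s v -> 1 <= v) /\
   (forall eps : K, 0 < eps -> exists s v, leader_strategy s /\
        worst_value (G := example_game) s v /\ v < 1 + eps) /\
   (forall s, leader_strategy s -> ~ worst_value (K := K) (G := example_game) s 1) /\
   ~ has_PSE K example_game).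
Proof.
have sym : symmetric_game example_game by [].
have noPSE : ~ has_PSE K example_game.
  case=> s [a [Hs [Hw Hmin]]].
  have Hgt := @WV K s _ Hs Hw.
  have [s' [v' [Hs' [Hw' Hv']]]] := @approx K (leader_cost s a - 1) ltac:(lra).
  have := Hmin s' v' Hs' Hw'; lra.
split; first by exists example_game.
split => //; split.
  by move=> s v Hs Hw; have := @WV K s v Hs Hw; lra.
split; first exact: approx.
split => // s Hs Hw; have := @WV K s 1 Hs Hw; lra.
Qed.
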